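(* Let $(\mathcal C,\otimes,\sigma,I,(\,)^* )$ be a compact closed category. An object $R$ of $\mathcal C$ is (extensionally) reflexive if and only if $R$ is both self-dual and self-similar.
   Context: In a compact closed category the internal hom is $[A\to B]=A^*\otimes B$. An object $R$ is (extensionally) reflexive if $R\cong[R\to R]$, i.e. there are mutually inverse isomorphisms $\mathrm{app}:R\to[R\to R]$ and $\mathrm{lam}:[R\to R]\to R$. An object $N$ is self-similar if $N\cong N\otimes N$ (the isomorphisms $N\otimes N\to N$ and $N\to N\otimes N$ are called code and decode arrows). An object $S$ is self-dual if $S\cong S^*$. *)

(* Defs.v *)
Set Implicit Arguments.
Unset Strict Implicit.

Record Category := {
  ob : Type;
  hom : ob -> ob -> Type;
  idm : forall A, hom A A;
  comp : forall A B C, hom B C -> hom A B -> hom A C;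
  comp_assoc : forall A B C D (h : hom C D) (g : hom B C) (f : hom A B),
      comp h (comp g f) = comp (comp h g) f;
  comp_id_l : forall A B (f : hom A B), comp (idm B) f = f;
  comp_id_r : forall A B (f : hom A B), comp f (idm A) = f
}.
Arguments idm {c} A.
Arguments comp {c A B C} _ _.
Coercion ob : Category >-> Sortclass.

Notation "g \o' f" := (comp g f) (at level 40, left associativity).

Definition iso (C : Category) (A B : C) : Prop :=
  exists (f : hom A B) (g : hom B A), g \o' f = idm A /\ f \o' g = idm B.

Record SymMonoidal (C : Category) := {
  tens : C -> C -> C;
  tensh : forall A B A' B', hom A B -> hom A' B' -> hom (tens A A') (tens B B');
  tens_id : forall A B, tensh (idm A) (idm B) = idm (tens A B);
  tens_comp : forall A B D A' B' D' (g : hom B D) (f : hom A B)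
                     (g' : hom B' D') (f' : hom A' B'),
      tensh (g \o' f) (g' \o' f') = tensh g g' \o' tensh f f';
  unitI : C;
  assoc : forall A B D, hom (tens (tens A B) D) (tens A (tens B D));
  assoc_inv : forall A B D, hom (tens A (tens B D)) (tens (tens A B) D);
  assoc_iso1 : forall A B D, assoc_inv A B D \o' assoc A B D = idm _;
  assoc_iso2 : forall A B D, assoc A B D \o' assoc_inv A B D = idm _;
  assoc_nat : forall A B D A' B' D' (f : hom A A') (g : hom B B') (h : hom D D'),
      assoc A' B' D' \o' tensh (tensh f g) h = tensh f (tensh g h) \o' assoc A B D;
  lunit : forall A, hom (tens unitI A) A;
  lunit_inv : forall A, hom A (tens unitI A);
  lunit_iso1 : forall A, lunit_inv A \o' lunit A = idm _;
  lunit_iso2 : forall A, lunit A \o' lunit_inv A = idm _;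
  lunit_nat : forall A B (f : hom A B),
      lunit B \o' tensh (idm unitI) f = f \o' lunit A;
  runit : forall A, hom (tens A unitI) A;
  runit_inv : forall A, hom A (tens A unitI);
  runit_iso1 : forall A, runit_inv A \o' runit A = idm _;
  runit_iso2 : forall A, runit A \o' runit_inv A = idm _;
  runit_nat : forall A B (f : hom A B),
      runit B \o' tensh f (idm unitI) = f \o' runit A;
  sym : forall A B, hom (tens A B) (tens B A);
  sym_nat : forall A B A' B' (f : hom A A') (g : hom B B'),
      sym A' B' \o' tensh f g = tensh g f \o' sym A B;
  sym_inv : forall A B, sym B A \o' sym A B = idm _;
  pentagon : forall A B D E,
      assoc A B (tens D E) \o' assoc (tens A B) D E
      = tensh (idm A) (assoc B D E) \o' assoc A (tens B D) E
          \o' tensh (assoc A B D) (idm E);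
  triangle : forall A B,
      tensh (idm A) (lunit B) \o' assoc A unitI B = tensh (runit A) (idm B);
  hexagon : forall A B D,
      assoc B D A \o' sym A (tens B D) \o' assoc A B D
      = tensh (idm B) (sym A D) \o' assoc B A D \o' tensh (sym A B) (idm D)
}.

Record CompactClosed (C : Category) (M : SymMonoidal C) := {
  dual : C -> C;
  eta : forall A, hom (unitI M) (tens M (dual A) A);
  eps : forall A, hom (tens M A (dual A)) (unitI M);
  snake1 : forall A,
      lunit M A \o' tensh M (eps A) (idm A) \o' assoc_inv M A (dual A) A
        \o' tensh M (idm A) (eta A) \o' runit_inv M A = idm A;
  snake2 : forall A,
      runit M (dual A) \o' tensh M (idm (dual A)) (eps A)
        \o' assoc M (dual A) A (dual A)
        \o' tensh M (eta A) (idm (dual A)) \o' lunit_inv M (dual A)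
      = idm (dual A)
}.

Definition ihom (C : Category) (M : SymMonoidal C) (K : CompactClosed M)
  (A B : C) : C := tens M (dual K A) B.

Definition reflexive (C : Category) (M : SymMonoidal C) (K : CompactClosed M)
  (R : C) : Prop := iso R (ihom K R R).

Definition self_similar (C : Category) (M : SymMonoidal C) (N : C) : Prop :=
  iso N (tens M N N).

Definition self_dual (C : Category) (M : SymMonoidal C) (K : CompactClosed M)
  (S : C) : Prop := iso S (dual K S).

(* Main.v *)
Require Import Defs.

Section S.
Variable C : Category.
Variable M : SymMonoidal C.
Variable K : CompactClosed M.

Local Notation "f <x> g" := (tensh M f g) (at level 35).
Local Notation "'1'" := (idm _).
Local Notation T := (tens M).
Local Notation I := (unitI M).
Local Notation "A ^*" := (dual K A) (at level 2).
Local Notation al := (assoc M).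
Local Notation ali := (assoc_inv M).
Local Notation la := (lunit M).
Local Notation lai := (lunit_inv M).
Local Notation ra := (runit M).
Local Notation rai := (runit_inv M).
Local Notation ep := (eps K).
Local Notation et := (eta K).

Lemma rw2 {A B D E : C} {w : hom D E} {x : hom B D} {y : hom A B} {z} :
  x \o' y = z -> w \o' x \o' y = w \o' z.
Proof. intros H; rewrite <- H; symmetry; apply comp_assoc. Qed.
Lemma rw3 {A B D E F : C} {w : hom E F} {x : hom D E} {y : hom B D} {v : hom A B} {z} :
  x \o' y \o' v = z -> w \o' x \o' y \o' v = w \o' z.
Proof. intros H; rewrite <- H; rewrite !comp_assoc; reflexivity. Qed.

Ltac nrm := repeat rewrite comp_assoc.
Ltac rw H := first [rewrite (rw2 H) | rewrite (rw3 H) | rewrite H]; nrm.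
Ltac rwl H := let H2 := constr:(eq_sym H) in rw H2.

Lemma tcl {A B D E} (g : hom B D) (f : hom A B) : (g \o' f) <x> idm E = (g <x> 1) \o' (f <x> 1).
Proof. rewrite <- tens_comp, comp_id_l; reflexivity. Qed.
Lemma tcr {A B D E} (g : hom B D) (f : hom A B) : idm E <x> (g \o' f) = (1 <x> g) \o' (1 <x> f).
Proof. rewrite <- tens_comp, comp_id_l; reflexivity. Qed.
Lemma xch1 {A B A' B'} (f : hom A B) (g : hom A' B') : f <x> g = (f <x> 1) \o' (1 <x> g).
Proof. rewrite <- tens_comp, comp_id_l, comp_id_r; reflexivity. Qed.
Lemma xch2 {A B A' B'} (f : hom A B) (g : hom A' B') : f <x> g = (1 <x> g) \o' (f <x> 1).
Proof. rewrite <- tens_comp, comp_id_l, comp_id_r; reflexivity. Qed.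
Lemma tid {A B} : idm (T A B) = idm A <x> idm B.
Proof. symmetry; apply tens_id. Qed.

Lemma inv_nat {A B A' B' : C} (p : hom A A') (p' : hom A' A) (q : hom B B') (q' : hom B' B)
  (X : hom A B) (Y : hom A' B') :
  p \o' p' = 1 -> q' \o' q = 1 -> q \o' X = Y \o' p -> q' \o' Y = X \o' p'.
Proof.
  intros H1 H2 H3.
  rewrite <- (comp_id_r (q' \o' Y)), <- H1. nrm. rewrite <- (comp_assoc q' Y p), <- H3.
  nrm. rewrite H2, comp_id_l. reflexivity.
Qed.

Lemma ali_nat {A B D A' B' D' : C} (f : hom A A') (g : hom B B') (h : hom D D') :
  ali A' B' D' \o' (f <x> (g <x> h)) = ((f <x> g) <x> h) \o' ali A B D.
Proof. apply inv_nat with (p := al A B D) (q := al A' B' D').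
  apply assoc_iso2. apply assoc_iso1. apply assoc_nat. Qed.
Lemma lai_nat {A B : C} (f : hom A B) : lai B \o' f = (idm I <x> f) \o' lai A.
Proof. apply inv_nat with (p := la A) (q := la B).
  apply lunit_iso2. apply lunit_iso1. apply lunit_nat. Qed.
Lemma rai_nat {A B : C} (f : hom A B) : rai B \o' f = (f <x> idm I) \o' rai A.
Proof. apply inv_nat with (p := ra A) (q := ra B).
  apply runit_iso2. apply runit_iso1. apply runit_nat. Qed.

Lemma faith_l {A B : C} (f g : hom A B) : idm I <x> f = idm I <x> g -> f = g.
Proof. intros H.
  rewrite <- (comp_id_r f), <- (comp_id_r g), <- (lunit_iso2 M A). nrm.
  rewrite <- !lunit_nat, H. reflexivity. Qed.
Lemma faith_r {A B : C} (f g : hom A B) : f <x> idm I = g <x> idm I -> f = g.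
Proof. intros H.
  rewrite <- (comp_id_r f), <- (comp_id_r g), <- (runit_iso2 M A). nrm.
  rewrite <- !runit_nat, H. reflexivity. Qed.
Lemma cancel_r {A B D : C} (p : hom A B) (p' : hom B A) (f g : hom B D) :
  p \o' p' = 1 -> f \o' p = g \o' p -> f = g.
Proof. intros H1 H2. rewrite <- (comp_id_r f), <- (comp_id_r g), <- H1. nrm.
  rewrite H2. reflexivity. Qed.

Lemma K2 (A B : C) : la (T A B) \o' al I A B = la A <x> idm B.
Proof.
  apply faith_l.
  apply (cancel_r (al I (T I A) B \o' (al I I A <x> idm B)) ((ali I I A <x> 1) \o' ali I (T I A) B)).
  - nrm. rwl (tcl (E:=B) (al I I A) (ali I I A)). rewrite assoc_iso2, tens_id, comp_id_r. apply assoc_iso2.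
  - rewrite tcr. nrm.
    rwl (pentagon M I I A B). rw (triangle M I (T A B)). rewrite tid.
    rwl (assoc_nat M (ra I) (idm A) (idm B)). rwl (triangle M I A). rw (tcl (E:=B) (idm I <x> la A) (al I I A)).
    rw (assoc_nat M (idm I) (la A) (idm B)). reflexivity.
Qed.

Lemma cancel_l {A B D : C} (p : hom B D) (p' : hom D B) (f g : hom A B) :
  p' \o' p = 1 -> p \o' f = p \o' g -> f = g.
Proof. intros H1 H2. rewrite <- (comp_id_l f), <- (comp_id_l g), <- H1.
  rewrite <- !comp_assoc, H2. reflexivity. Qed.

Lemma K1 (A B : C) : (idm A <x> ra B) \o' al A B I = ra (T A B).
Proof.
  apply faith_r. apply (cancel_l (al A B I) (ali A B I)). apply assoc_iso1.
  rewrite tcl. nrm. rw (assoc_nat M (idm A) (ra B) (idm I)).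
  rwl (triangle M B I). rw (tcr (E:=A) (idm B <x> la I) (al B I I)).
  rwl (pentagon M A B I I). rwl (assoc_nat M (idm A) (idm B) (la I)).
  rewrite (tens_id M A B). rw (triangle M (T A B) I). reflexivity.
Qed.

Lemma lI (A : C) : la (T I A) = idm I <x> la A.
Proof. apply (cancel_l (la A) (lai A)). apply lunit_iso1.
  symmetry. apply lunit_nat. Qed.

Lemma K3 : la I = ra I.
Proof. apply faith_r. rewrite <- K2, lI. apply triangle. Qed.

Lemma xchg {A B A' B' : C} (f : hom A B) (g : hom A' B') :
  (idm B <x> g) \o' (f <x> idm A') = (f <x> idm B') \o' (idm A <x> g).
Proof. rewrite <- xch1, <- xch2. reflexivity. Qed.

Lemma tcrinv {A B : C} (E : C) (f : hom A B) (g : hom B A) : f \o' g = 1 -> (idm E <x> f) \o' (idm E <x> g) = 1.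
Proof. intros H. rewrite <- tens_comp, H, comp_id_l. apply tens_id. Qed.
Lemma tclinv {A B : C} (E : C) (f : hom A B) (g : hom B A) : f \o' g = 1 -> (f <x> idm E) \o' (g <x> idm E) = 1.
Proof. intros H. rewrite <- tens_comp, H, comp_id_l. apply tens_id. Qed.

Lemma tri_i (A B : C) : ali A I B \o' (idm A <x> lai B) = rai A <x> idm B.
Proof. apply (cancel_l (ra A <x> idm B) (rai A <x> idm B)).
  - apply tclinv. apply runit_iso1.
  - rewrite (tclinv B _ _ (runit_iso2 M A)). rewrite comp_assoc, <- triangle. nrm.
    rw (assoc_iso2 M A I B). rewrite comp_id_r. apply tcrinv. apply lunit_iso2.
Qed.

Lemma tri2 (A B : C) : al A I B \o' (rai A <x> idm B) = idm A <x> lai B.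
Proof. apply (cancel_l (idm A <x> la B) (idm A <x> lai B)).
  - rewrite <- tens_comp, lunit_iso1, comp_id_l. apply tens_id.
  - rewrite comp_assoc, triangle, <- tens_comp, runit_iso2, <- tens_comp, lunit_iso2, !comp_id_l, !tens_id.
    reflexivity.
Qed.

Lemma K2i (A B : C) : ali I A B \o' lai (T A B) = lai A <x> idm B.
Proof. apply (cancel_l (la A <x> idm B) (lai A <x> idm B)).
  - apply tclinv. apply lunit_iso1.
  - rewrite (tclinv B _ _ (lunit_iso2 M A)). rewrite comp_assoc, <- K2. nrm.
    rw (assoc_iso2 M I A B). rewrite comp_id_r. apply lunit_iso2.
Qed.

Lemma K1i (A B : C) : ra (T A B) \o' ali A B I = idm A <x> ra B.
Proof. rewrite <- K1. rewrite <- comp_assoc, assoc_iso2, comp_id_r. reflexivity. Qed.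

Lemma pentA (A B D E : C) :
  ali A B (T D E) \o' (idm A <x> al B D E) = al (T A B) D E \o' (ali A B D <x> idm E) \o' ali A (T B D) E.
Proof.
  apply (cancel_l (al A B (T D E)) (ali A B (T D E))). apply assoc_iso1.
  apply (cancel_r (al A (T B D) E \o' (al A B D <x> idm E)) ((ali A B D <x> idm E) \o' ali A (T B D) E)).
  - nrm. rw (tclinv E _ _ (assoc_iso2 M A B D)). rewrite comp_id_r. apply assoc_iso2.
  - nrm. rewrite assoc_iso2, comp_id_l. rw (assoc_iso1 M A (T B D) E). rewrite comp_id_r.
    rw (tclinv E _ _ (assoc_iso1 M A B D)). rewrite comp_id_r. symmetry. apply pentagon.
Qed.

Lemma pentB (A B D E : C) :
  al (T A B) D E \o' (ali A B D <x> idm E) = ali A B (T D E) \o' (idm A <x> al B D E) \o' al A (T B D) E.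
Proof.
  apply (cancel_l (al A B (T D E)) (ali A B (T D E))). apply assoc_iso1.
  nrm. rewrite pentagon. rw (tclinv E _ _ (assoc_iso2 M A B D)). rewrite comp_id_r.
  rewrite assoc_iso2, comp_id_l. reflexivity.
Qed.

Lemma pentC (A B D E : C) :
  (idm A <x> ali B D E) \o' al A B (T D E) = al A (T B D) E \o' (al A B D <x> idm E) \o' ali (T A B) D E.
Proof.
  apply (cancel_r (al (T A B) D E) (ali (T A B) D E)). apply assoc_iso2.
  nrm. rw (pentagon M A B D E). rewrite (tcrinv A _ _ (assoc_iso1 M B D E)), comp_id_l.
  rw (assoc_iso1 M (T A B) D E). rewrite comp_id_r. reflexivity.
Qed.

Lemma S1X (A X : C) :
  la (T A X) \o' (ep A <x> idm (T A X)) \o' ali A (A^*) (T A X) \o' (idm A <x> al (A^*) A X)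
  \o' (idm A <x> (et A <x> idm X)) \o' (idm A <x> lai X) = 1.
Proof.
  rw (pentA A (A^*) A X). rewrite <- (tens_id M A X).
  rwl (assoc_nat M (ep A) (idm A) (idm X)). rewrite K2.
  rw (ali_nat (idm A) (et A) (idm X)). rw (tri_i A X).
  rewrite <- !tcl. rewrite snake1. reflexivity.
Qed.

Lemma S2Y (A Y : C) :
  (idm (A^*) <x> la Y) \o' (idm (A^*) <x> (ep A <x> idm Y)) \o' (idm (A^*) <x> ali A (A^*) Y)
  \o' al (A^*) A (T (A^*) Y) \o' (et A <x> idm (T (A^*) Y)) \o' lai (T (A^*) Y) = 1.
Proof.
  rw (pentC (A^*) A (A^*) Y). rwl (assoc_nat M (idm (A^*)) (ep A) (idm Y)).
  rw (triangle M (A^*) Y). rewrite <- (tens_id M (A^*) Y).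
  rw (ali_nat (et A) (idm (A^*)) (idm Y)). rw (K2i (A^*) Y).
  rewrite <- !tcl. rewrite snake2. reflexivity.
Qed.

Lemma S2X (A X : C) :
  ra (T X (A^*)) \o' (idm (T X (A^*)) <x> ep A) \o' al (T X (A^*)) A (A^*)
  \o' (ali X (A^*) A <x> idm (A^*)) \o' ((idm X <x> et A) <x> idm (A^*)) \o' (rai X <x> idm (A^*)) = 1.
Proof.
  rw (pentB X (A^*) A (A^*)). rewrite <- (tens_id M X (A^*)).
  rwl (ali_nat (idm X) (idm (A^*)) (ep A)). rw (K1i X (A^*)).
  rw (assoc_nat M (idm X) (et A) (idm (A^*))). rw (tri2 X (A^*)).
  rewrite <- !tcr. rewrite snake2. reflexivity.
Qed.

Lemma use_id_r {A B : C} (g : hom A B) (k : hom A A) (f : hom A B) : k = 1 -> f = g \o' k -> f = g.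
Proof. intros H1 H2. rewrite H2, H1. apply comp_id_r. Qed.

Definition E {A Y X : C} (h : hom X (T (A^*) Y)) : hom (T A X) Y :=
  la Y \o' (ep A <x> idm Y) \o' ali A (A^*) Y \o' (idm A <x> h).
Definition L {A Y X : C} (g : hom (T A X) Y) : hom X (T (A^*) Y) :=
  (idm (A^*) <x> g) \o' al (A^*) A X \o' (et A <x> idm X) \o' lai X.
Definition F {A Z : C} (h : hom Z A) : hom (T Z (A^*)) I := ep A \o' (h <x> idm (A^*)).
Definition G {A Z : C} (g : hom (T Z (A^*)) I) : hom Z A :=
  la A \o' (g <x> idm A) \o' ali Z (A^*) A \o' (idm Z <x> et A) \o' rai Z.

Lemma LE {A Y X : C} (h : hom X (T (A^*) Y)) : L (E h) = h.
Proof. unfold L, E. rewrite !tcr. nrm.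
  rwl (assoc_nat M (idm (A^*)) (idm A) h). rewrite (tens_id M (A^*) A).
  rw (xchg (et A) h). rwl (lai_nat h). rewrite S2Y, comp_id_l. reflexivity. Qed.

Lemma EL {A Y X : C} (g : hom (T A X) Y) : E (L g) = g.
Proof. unfold L, E. rewrite !tcr. nrm.
  rw (ali_nat (idm A) (idm (A^*)) g). rewrite (tens_id M A (A^*)).
  rwl (xchg (ep A) g). rw (lunit_nat M g).
  apply (use_id_r g _ _ (S1X A X)). nrm. reflexivity. Qed.

Lemma GF {A Z : C} (h : hom Z A) : G (F h) = h.
Proof. unfold G, F. rewrite tcl. nrm.
  rwl (ali_nat h (idm (A^*)) (idm A)). rewrite (tens_id M (A^*) A).
  rwl (xchg h (et A)). rwl (rai_nat h). rewrite snake1, comp_id_l. reflexivity. Qed.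

Lemma FG {A Z : C} (g : hom (T Z (A^*)) I) : F (G g) = g.
Proof. unfold G, F. rewrite !tcl. nrm.
  rewrite <- K2. nrm. rwl (lunit_nat M (ep A)). rw (assoc_nat M g (idm A) (idm (A^*))).
  rewrite (tens_id M A (A^*)). rw (xchg g (ep A)). rewrite K3. rw (runit_nat M g).
  apply (use_id_r g _ _ (S2X A Z)). nrm. reflexivity. Qed.

Lemma E_nat {A Y X X' : C} (h : hom X (T (A^*) Y)) (k : hom X' X) : E (h \o' k) = E h \o' (idm A <x> k).
Proof. unfold E. rewrite tcr. nrm. reflexivity. Qed.

Lemma L_nat {A Y X X' : C} (g : hom (T A X) Y) (k : hom X' X) : L g \o' k = L (g \o' (idm A <x> k)).
Proof. unfold L. nrm. rw (lai_nat k). rwl (xchg (et A) k). rewrite <- (tens_id M (A^*) A).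
  rw (assoc_nat M (idm (A^*)) (idm A) k). rwl (tcr (E := A^*) g (idm A <x> k)). reflexivity. Qed.

Lemma rep (D A : C) (Psi : forall X : C, hom X D -> hom (T A X) I) :
  (forall X X' (h : hom X D) (k : hom X' X), Psi X' (h \o' k) = Psi X h \o' (idm A <x> k)) ->
  (forall X (h h' : hom X D), Psi X h = Psi X h' -> h = h') ->
  (forall X (g : hom (T A X) I), exists h, Psi X h = g) ->
  iso D (T (A^*) I).
Proof.
  intros Hn Hi Hs.
  destruct (Hs _ (E (idm (T (A^*) I)))) as [v Hv].
  exists (L (Psi D (idm D))), v. split.
  - apply Hi. rewrite Hn, Hv, <- E_nat, comp_id_l, EL. reflexivity.
  - rewrite L_nat, <- Hn, comp_id_l, Hv. apply LE.
Qed.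

Lemma iso_refl (A : C) : iso A A.
Proof. exists (idm A), (idm A). split; apply comp_id_l. Qed.
Lemma iso_sym (A B : C) : iso A B -> iso B A.
Proof. intros [f [g [H1 H2]]]. exists g, f. split; assumption. Qed.
Lemma iso_trans (A B D : C) : iso A B -> iso B D -> iso A D.
Proof. intros [f [g [H1 H2]]] [f' [g' [H1' H2']]]. exists (f' \o' f), (g \o' g'). split.
  - rewrite comp_assoc, <- (comp_assoc g g' f'), H1', comp_id_r. assumption.
  - rewrite comp_assoc, <- (comp_assoc f' f g), H2, comp_id_r. assumption.
Qed.
Lemma iso_tens (A B A' B' : C) : iso A B -> iso A' B' -> iso (T A A') (T B B').
Proof. intros [f [g [H1 H2]]] [f' [g' [H1' H2']]]. exists (f <x> f'), (g <x> g'). split.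
  - rewrite <- tens_comp, H1, H1'. apply tens_id.
  - rewrite <- tens_comp, H2, H2'. apply tens_id.
Qed.

Lemma F_nat {A Z Z' : C} (m : hom Z A) (n : hom Z' Z) : F (m \o' n) = F m \o' (n <x> idm (A^*)).
Proof. unfold F. rewrite tcl. nrm. reflexivity. Qed.

Lemma refl_sd (R : C) : iso R (T (R^*) R) -> iso R (R^*).
Proof.
  intros [i [j [Hji Hij]]].
  assert (Hrep : iso R (T (R^*) I)).
  { apply (rep R R (fun X h => F (E (i \o' h)) \o' sym M (R^*) (T R X) \o' al (R^*) R X \o' (i <x> idm X))).
    - intros X X' h k. rewrite comp_assoc, E_nat, F_nat. nrm.
      rwl (sym_nat M (idm (R^*)) (idm R <x> k)). rwl (assoc_nat M (idm (R^*)) (idm R) k).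
      rewrite (tens_id M (R^*) R). rw (xchg i k). reflexivity.
    - intros X h h' H.
      assert (H1 : F (E (i \o' h)) = F (E (i \o' h'))).
      { apply (cancel_r (sym M (R^*) (T R X) \o' al (R^*) R X \o' (i <x> idm X))
                        ((j <x> idm X) \o' ali (R^*) R X \o' sym M (T R X) (R^*))).
        - nrm. rw (tclinv X _ _ Hij). rewrite comp_id_r. rw (assoc_iso2 M (R^*) R X).
          rewrite comp_id_r. apply sym_inv.
        - nrm. nrm. exact H. }
      apply (f_equal G) in H1. rewrite !GF in H1. apply (f_equal L) in H1. rewrite !LE in H1.
      apply (cancel_l i j). exact Hji. exact H1.
    - intros X g.
      exists (j \o' L (G (g \o' (j <x> idm X) \o' ali (R^*) R X \o' sym M (T R X) (R^*)))).
      rewrite comp_assoc, Hij, comp_id_l, EL, FG. nrm.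
      rw (sym_inv M (R^*) (T R X)). rewrite comp_id_r. rw (assoc_iso1 M (R^*) R X).
      rewrite comp_id_r. rw (tclinv X _ _ Hji). apply comp_id_r. }
  apply (iso_trans _ _ _ Hrep). exists (ra (R^*)), (rai (R^*)). split.
  apply runit_iso1. apply runit_iso2.
Qed.
End S.

Theorem mainTheorem1 (C : Category) (M : SymMonoidal C) (K : CompactClosed M)
  (R : C) :
  reflexive K R <-> (self_dual K R /\ self_similar M R).
Proof.
  unfold reflexive, self_dual, self_similar, ihom. split.
  - intros H. assert (Hd : iso R (dual K R)) by (apply refl_sd; exact H).
    split. exact Hd.
    apply (iso_trans _ _ _ _ H). apply iso_tens. apply iso_sym; exact Hd. apply iso_refl.
  - intros [Hd Hs]. apply (iso_trans _ _ _ _ Hs). apply iso_tens. exact Hd. apply iso_refl.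
Qed.
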